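(* For any disjoint nonempty sets $T,B\subseteq[d]$, the function $\theta\mapsto\log\mathbb{P}_\theta(B\prec T)$ is concave on $\mathbb{R}^d$. Consequently, the order-$M$ rank-breaking log-likelihood $\mathcal{L}_{\rm RB}(\theta)=\sum_{j=1}^n\sum_{a=1}^{\ell_j}\log\mathbb{P}_\theta(e_{j,a})$ is concave in $\theta\in\mathbb{R}^d$ for any collection of edges $e_{j,a}$.
   Context: PL model: items $[d]$, parameter $\theta\in\mathbb{R}^d$; when a set $S$ is offered, a ranking $\sigma:[|S|]\to S$ (position 1 most preferred) is drawn with probability $\prod_{i=1}^{|S|-1}e^{\theta_{\sigma(i)}}/\sum_{i'=i}^{|S|}e^{\theta_{\sigma(i')}}$. For disjoint nonempty $T,B\subseteq[d]$, $\mathbb{P}_\theta(B\prec T)=\sum_{\sigma}\prod_{u=1}^{|T|}\frac{e^{\theta_{\sigma(u)}}}{\sum_{c=u}^{|T|}e^{\theta_{\sigma(c)}}+\sum_{i\in B}e^{\theta_i}}$ (sum over all orderings $\sigma$ of $T$), the PL probability that, when $T\cup B$ is offered, every item of $T$ is ranked above every item of $B$. An edge $e_{j,a}$ is such a pair $(B,T)$ and $\mathbb{P}_\theta(e_{j,a})=\mathbb{P}_\theta(B\prec T)$. *)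

(* Defs.v *)
From Stdlib Require Import Reals List.
Import ListNotations.
Open Scope R_scope.

(* Items of [d] are the naturals 0..d-1; a parameter theta in R^d is a
   function nat -> R (only coordinates < d are ever used). *)

Fixpoint insert_all {A : Type} (x : A) (l : list A) : list (list A) :=
  match l with
  | [] => [[x]]
  | y :: l' => (x :: y :: l') :: map (cons y) (insert_all x l')
  end.

Fixpoint perms {A : Type} (l : list A) : list (list A) :=
  match l with
  | [] => [[]]
  | x :: l' => flat_map (insert_all x) (perms l')
  end.

Definition sum_list (l : list R) : R := fold_right Rplus 0 l.

Definition sumexp (theta : nat -> R) (S : list nat) : R :=
  sum_list (map (fun i => exp (theta i)) S).

Fixpoint seq_prob (theta : nat -> R) (B : list nat) (sigma : list nat) : R :=
  match sigma with
  | [] => 1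
  | x :: rest =>
      exp (theta x) / (sumexp theta (x :: rest) + sumexp theta B)
      * seq_prob theta B rest
  end.

Definition prob_BT (theta : nat -> R) (B T : list nat) : R :=
  sum_list (map (seq_prob theta B) (perms T)).

Definition valid_pair (d : nat) (B T : list nat) : Prop :=
  T <> [] /\ B <> [] /\ NoDup T /\ NoDup B /\
  (forall i, In i T -> (i < d)%nat) /\ (forall i, In i B -> (i < d)%nat) /\
  (forall i, In i T -> ~ In i B).

Definition concave (f : (nat -> R) -> R) : Prop :=
  forall (th1 th2 : nat -> R) (t : R), 0 <= t <= 1 ->
    t * f th1 + (1 - t) * f th2 <= f (fun i => t * th1 i + (1 - t) * th2 i).

(* An edge e = (B, T); edges.(j) = [e_{j,1}; ...; e_{j,l_j}]. *)
Definition L_RB (edges : list (list (list nat * list nat))) (theta : nat -> R) : R :=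
  sum_list (map (fun ej => sum_list (map (fun e => ln (prob_BT theta (fst e) (snd e))) ej))
                edges).

(* Main.v *)
Require Import Defs.
From Stdlib Require Import Reals List Lra Lia Permutation ClassicalEpsilon Ranalysis5 FunctionalExtensionality.
From Coquelicot Require Import Coquelicot.
Import ListNotations.
Open Scope R_scope.

Fixpoint picks (l : list nat) : list (nat * list nat) :=
  match l with
  | [] => []
  | a :: l' => (a, l') :: map (fun p => (fst p, a :: snd p)) (picks l')
  end.

Lemma sum_list_app : forall a b, sum_list (a ++ b) = sum_list a + sum_list b.
Proof. induction a; intros; simpl; [ring| rewrite IHa; ring]. Qed.

Lemma sum_list_cons x l : sum_list (x :: l) = x + sum_list l.
Proof. reflexivity. Qed.

Lemma sum_flat_map {A B : Type} (f : B -> R) (g : A -> list B) (l : list A) :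
  sum_list (map f (flat_map g l)) = sum_list (map (fun x => sum_list (map f (g x))) l).
Proof. induction l; simpl; auto. rewrite map_app, sum_list_app, IHl; auto. Qed.

Lemma sum_map_map {A B : Type} (f : B -> R) (g : A -> B) (l : list A) :
  sum_list (map f (map g l)) = sum_list (map (fun x => f (g x)) l).
Proof. rewrite map_map; auto. Qed.

Lemma sum_ext_in {A : Type} (f g : A -> R) (l : list A) :
  (forall x, In x l -> f x = g x) -> sum_list (map f l) = sum_list (map g l).
Proof. intros H; rewrite (map_ext_in f g l H); auto. Qed.

Lemma sumL_scal {A : Type} (c : R) (f : A -> R) (l : list A) :
  sum_list (map (fun x => c * f x) l) = c * sum_list (map f l).
Proof. induction l; simpl; [ring| rewrite IHl; ring]. Qed.

Lemma sumL_plus {A : Type} (f g : A -> R) (l : list A) :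
  sum_list (map (fun x => f x + g x) l) = sum_list (map f l) + sum_list (map g l).
Proof. induction l; simpl; [ring| rewrite IHl; ring]. Qed.

Definition hf (a : nat) (f : list nat -> R) (s : list nat) : R :=
  match s with [] => 0 | y :: s' => sum_list (map (fun t => f (y :: t)) (insert_all a s')) end.

Lemma insert_all_sum a f s :
  sum_list (map f (insert_all a s)) = f (a :: s) + hf a f s.
Proof. destruct s; simpl; [ring|]. rewrite map_map; auto. Qed.

Lemma picks_cons a l : picks (a :: l) = (a, l) :: map (fun p => (fst p, a :: snd p)) (picks l).
Proof. reflexivity. Qed.
Lemma perms_cons (a : nat) (l : list nat) : perms (a :: l) = flat_map (insert_all a) (perms l).
Proof. reflexivity. Qed.

Lemma perms_sum : forall l (f : list nat -> R), l <> [] ->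
  sum_list (map f (perms l)) =
  sum_list (map (fun p => sum_list (map (fun r => f (fst p :: r)) (perms (snd p)))) (picks l)).
Proof.
  induction l as [|a l IH]; intros f Hl; [congruence|].
  destruct l as [|b l'].
  - simpl. ring.
  - change (perms (a :: b :: l')) with (flat_map (insert_all a) (perms (b :: l'))).
    rewrite sum_flat_map.
    rewrite (sum_ext_in _ (fun x => f (a :: x) + hf a f x)) by (intros; apply insert_all_sum).
    rewrite sumL_plus.
    rewrite (IH (hf a f)) by discriminate.
    rewrite (picks_cons a (b :: l')). cbn [map sum_list fst snd].
    rewrite sum_list_cons, sum_map_map. f_equal.
    apply sum_ext_in. intros [x r] _. cbn [fst snd].
    rewrite (perms_cons a r), sum_flat_map. apply sum_ext_in. intros rho _. unfold hf.
    reflexivity.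
Qed.

Lemma insert_all_perm (a : nat) : forall s t, In t (insert_all a s) -> Permutation (a :: s) t.
Proof.
  induction s as [|y s IH]; simpl; intros t Ht.
  - destruct Ht as [<-|[]]; auto.
  - destruct Ht as [<-|Ht]; auto.
    apply in_map_iff in Ht as [t' [<- Ht']].
    eapply perm_trans; [apply perm_swap|]. apply perm_skip, IH, Ht'.
Qed.

Lemma perms_perm : forall (l s : list nat), In s (perms l) -> Permutation l s.
Proof.
  induction l as [|a l IH]; simpl; intros s Hs.
  - destruct Hs as [<-|[]]; auto.
  - apply in_flat_map in Hs as [r [Hr Hs]].
    eapply perm_trans; [apply perm_skip, IH, Hr|]. apply insert_all_perm, Hs.
Qed.

Lemma picks_perm : forall l x r, In (x, r) (picks l) -> Permutation l (x :: r).
Proof.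
  induction l as [|a l IH]; simpl; intros x r H; [contradiction|].
  destruct H as [H|H]; [inversion H; subst; auto|].
  apply in_map_iff in H as [[x' r'] [H1 H2]]. simpl in H1. inversion H1; subst.
  eapply perm_trans; [apply perm_skip, IH, H2|]. apply perm_swap.
Qed.

Lemma sumexp_perm th : forall l l', Permutation l l' -> sumexp th l = sumexp th l'.
Proof.
  intros l l' H; induction H; unfold sumexp in *; simpl in *; try lra.
Qed.

Lemma sumexp_nonneg th l : 0 <= sumexp th l.
Proof. induction l; unfold sumexp in *; simpl; [lra|]. pose proof (exp_pos (th a)); lra. Qed.

Lemma sumexp_pos th l : l <> [] -> 0 < sumexp th l.
Proof. destruct l; [congruence|]. intros _. pose proof (sumexp_nonneg th l).
  unfold sumexp in *; simpl. pose proof (exp_pos (th n)); lra. Qed.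

Lemma prob_rec th B l : l <> [] ->
  prob_BT th B l * (sumexp th l + sumexp th B) =
  sum_list (map (fun p => exp (th (fst p)) * prob_BT th B (snd p)) (picks l)).
Proof.
  intros Hl. unfold prob_BT at 1. rewrite perms_sum by auto.
  assert (Hpos : 0 < sumexp th l + sumexp th B).
  { pose proof (sumexp_pos th l Hl). pose proof (sumexp_nonneg th B). lra. }
  rewrite Rmult_comm, <- sumL_scal.
  apply sum_ext_in. intros [x r] Hin. simpl.
  unfold prob_BT. rewrite <- !sumL_scal. apply sum_ext_in. intros rho Hrho. simpl.
  rewrite (sumexp_perm th (x :: rho) l).
  - field. lra.
  - apply Permutation_sym. eapply perm_trans; [apply picks_perm, Hin|].
    apply perm_skip, perms_perm, Hrho.
Qed.

Lemma concave_deriv (g g' : R -> R) :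
  (forall x, derivable_pt_lim g x (g' x)) ->
  (forall x y, x <= y -> g' y <= g' x) ->
  forall x y t, 0 <= t <= 1 -> t * g x + (1 - t) * g y <= g (t * x + (1 - t) * y).
Proof.
  intros Hd Hm.
  assert (Key : forall x y t, x < y -> 0 < t < 1 ->
            t * g x + (1 - t) * g y <= g (t * x + (1 - t) * y)).
  { intros x y t Hxy Ht. set (z := t * x + (1 - t) * y).
    assert (Hxz : x < z) by (unfold z; nra).
    assert (Hzy : z < y) by (unfold z; nra).
    destruct (MVT_cor2 g g' x z Hxz (fun c _ => Hd c)) as [c1 [E1 H1]].
    destruct (MVT_cor2 g g' z y Hzy (fun c _ => Hd c)) as [c2 [E2 H2]].
    assert (g' z <= g' c1) by (apply Hm; lra).
    assert (g' c2 <= g' z) by (apply Hm; lra).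
    assert (E3 : z - x = (1 - t) * (y - x)) by (unfold z; ring).
    assert (E4 : y - z = t * (y - x)) by (unfold z; ring).
    assert (g z - g x >= g' z * (z - x)) by (rewrite E1; apply Rle_ge, Rmult_le_compat_r; lra).
    assert (g y - g z <= g' z * (y - z)) by (rewrite E2; apply Rmult_le_compat_r; lra).
    rewrite E3 in *; rewrite E4 in *. nra. }
  intros x y t Ht.
  destruct (Req_dec t 0) as [->|H0]; [replace (0 * x + (1 - 0) * y) with y by ring; lra|].
  destruct (Req_dec t 1) as [->|H1]; [replace (1 * x + (1 - 1) * y) with x by ring; lra|].
  destruct (Rtotal_order x y) as [Hxy|[->|Hxy]].
  - apply Key; lra.
  - replace (t * y + (1 - t) * y) with y by ring. lra.
  - replace (t * x + (1 - t) * y) with ((1 - t) * y + (1 - (1 - t)) * x) by ring.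
    pose proof (Key y x (1 - t) Hxy ltac:(lra)). lra.
Qed.

Lemma exp_convex x y t : 0 <= t <= 1 ->
  exp (t * x + (1 - t) * y) <= t * exp x + (1 - t) * exp y.
Proof.
  intros Ht.
  pose proof (concave_deriv (fun x => - exp x) (fun x => - exp x)) as H.
  assert (forall x y, - exp x * t + - exp y * (1 - t) <= - exp (t * x + (1 - t) * y)).
  { intros. pose proof (H ltac:(intros; apply derivable_pt_lim_opp, derivable_pt_lim_exp)) as H'.
    specialize (H' ltac:(intros a b Hab; destruct Hab as [Hab| ->]; [pose proof (exp_increasing _ _ Hab)|]; lra) x0 y0 t Ht).
    lra. }
  specialize (H0 x y). lra.
Qed.

Lemma ln_concave p q t : 0 < p -> 0 < q -> 0 <= t <= 1 ->
  t * ln p + (1 - t) * ln q <= ln (t * p + (1 - t) * q).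
Proof.
  intros Hp Hq Ht. rewrite <- (ln_exp (t * ln p + (1 - t) * ln q)).
  apply ln_le; [apply exp_pos|]. pose proof (exp_convex (ln p) (ln q) t Ht).
  rewrite !exp_ln in H by auto. auto.
Qed.

Definition phi (x : R) : R := 1 - exp (- exp x).
Definition lphi (x : R) : R := ln (phi x).

Lemma phi_pos x : 0 < phi x.
Proof. unfold phi. pose proof (exp_pos x).
  assert (exp (- exp x) < 1). { rewrite <- exp_0. apply exp_increasing. lra. } lra. Qed.

Lemma phi_lt1 x : phi x < 1.
Proof. unfold phi. pose proof (exp_pos (- exp x)). lra. Qed.

Lemma phi_le_exp x : phi x <= exp x.
Proof. unfold phi. pose proof (exp_ineq1_le (- exp x)). lra. Qed.

Lemma phi_mono x y : x <= y -> phi x <= phi y.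
Proof. intros H. unfold phi. destruct H as [H| ->]; [|lra].
  pose proof (exp_increasing _ _ H). pose proof (exp_increasing (- exp y) (- exp x) ltac:(lra)). lra. Qed.

Lemma lphi_mono x y : x <= y -> lphi x <= lphi y.
Proof. intros H. unfold lphi. apply ln_le; [apply phi_pos| apply phi_mono; auto]. Qed.

Definition dlphi (x : R) : R := exp x * exp (- exp x) / (1 - exp (- exp x)).

Lemma lphi_deriv x : derivable_pt_lim lphi x (dlphi x).
Proof.
  apply is_derive_Reals. unfold lphi, phi, dlphi.
  pose proof (phi_pos x). unfold phi in H.
  auto_derive; [lra|]. field. lra.
Qed.

Lemma slope_exp v1 v2 : 0 < v1 -> v1 <= v2 -> v2 * (exp v1 - 1) <= v1 * (exp v2 - 1).
Proof.
  intros H1 H2. set (s := v1 / v2).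
  assert (Hs : 0 <= s <= 1). { unfold s. split. apply Rlt_le, Rdiv_lt_0_compat; lra.
    apply Rmult_le_reg_r with v2; [lra|]. unfold Rdiv. rewrite Rmult_assoc, Rinv_l by lra. lra. }
  pose proof (exp_convex v2 0 s Hs). rewrite exp_0 in H.
  replace (s * v2 + (1 - s) * 0) with v1 in H by (unfold s; field; lra).
  assert (v2 * exp v1 <= v2 * (s * exp v2 + (1 - s) * 1)) by (apply Rmult_le_compat_l; lra).
  replace (v2 * (s * exp v2 + (1 - s) * 1)) with (v1 * exp v2 + v2 - v1) in H0 by (unfold s; field; lra).
  lra.
Qed.

Lemma dlphi_mono x y : x <= y -> dlphi y <= dlphi x.
Proof.
  intros H. unfold dlphi.
  set (v1 := exp x). set (v2 := exp y).
  assert (Hv1 : 0 < v1) by apply exp_pos.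
  assert (Hv : v1 <= v2). { unfold v1, v2. destruct H as [H| ->]; [left; apply exp_increasing; auto| lra]. }
  assert (E : forall v, 0 < v -> v * exp (- v) / (1 - exp (- v)) = v / (exp v - 1)).
  { intros v Hv0. assert (exp v > 1). { rewrite <- exp_0. apply exp_increasing; lra. }
    rewrite exp_Ropp. field. split; lra. }
  rewrite !E by lra.
  assert (exp v1 > 1) by (rewrite <- exp_0; apply exp_increasing; lra).
  assert (exp v2 > 1) by (rewrite <- exp_0; apply exp_increasing; lra).
  pose proof (slope_exp v1 v2 Hv1 Hv).
  apply Rmult_le_reg_r with ((exp v1 - 1) * (exp v2 - 1)). nra.
  field_simplify; [|lra|lra]. nra.
Qed.

Lemma lphi_concave x y t : 0 <= t <= 1 ->
  t * lphi x + (1 - t) * lphi y <= lphi (t * x + (1 - t) * y).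
Proof. apply concave_deriv with dlphi; [apply lphi_deriv | intros; apply dlphi_mono; auto]. Qed.

Lemma exp_le_mono x y : x <= y -> exp x <= exp y.
Proof. intros [H| ->]; [left; apply exp_increasing; auto| lra]. Qed.

Lemma ln_le_inv x y : 0 < x -> 0 < y -> ln x <= ln y -> x <= y.
Proof. intros Hx Hy H. rewrite <- (exp_ln x), <- (exp_ln y) by auto. apply exp_le_mono; auto. Qed.

Lemma cont_to_pt f x : continuous f x -> continuity_pt f x.
Proof. intros H. apply continuity_pt_filterlim. exact H. Qed.
Lemma pt_to_cont f x : continuity_pt f x -> continuous f x.
Proof. intros H. apply continuity_pt_filterlim. exact H. Qed.

Section Q.
Variable f : R -> R.
Variables a b : R.
Hypothesis Hab : a < b.
Hypothesis Hc : forall x, continuous f x.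
Hypothesis Hp : forall x, 0 < f x.

Let I := RInt f a b.
Let Phi x := RInt f a x / I.

Lemma exRInt u v : ex_RInt f u v.
Proof. apply (@ex_RInt_continuous R_CompleteNormedModule). intros; apply Hc. Qed.

Lemma I_pos : 0 < I.
Proof. apply RInt_gt_0; auto. Qed.

Lemma Phi_deriv x : derivable_pt_lim Phi x (f x / I).
Proof.
  apply is_derive_Reals. unfold Phi, Rdiv.
  apply (is_derive_ext (fun x => scal (/ I) (RInt f a x))).
  { intros; unfold scal; simpl; unfold mult; simpl; ring. }
  replace (f x * / I) with (scal (/I) (f x)) by (unfold scal; simpl; unfold mult; simpl; ring).
  apply is_derive_scal. apply is_derive_RInt with a; [|apply Hc].
  apply filter_forall. intros; apply (@RInt_correct R_CompleteNormedModule), exRInt.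
Qed.

Lemma Phi_cont x : continuity_pt Phi x.
Proof. apply derivable_continuous_pt. exists (f x / I). apply Phi_deriv. Qed.

Lemma Phi_incr x y : x < y -> Phi x < Phi y.
Proof.
  intros H. unfold Phi. pose proof I_pos.
  rewrite <- (RInt_Chasles f a x y) by apply exRInt.
  assert (0 < RInt f x y) by (apply RInt_gt_0; auto).
  unfold plus; simpl. apply Rmult_lt_compat_r; [apply Rinv_0_lt_compat; auto| lra].
Qed.

Lemma Phi_a : Phi a = 0.
Proof. unfold Phi. rewrite RInt_point. unfold zero; simpl. unfold Rdiv; ring. Qed.
Lemma Phi_b : Phi b = 1.
Proof. unfold Phi. fold I. field. pose proof I_pos; lra. Qed.

Let L := a - 1.
Let U := b + 1.

Lemma inv_ex : forall tau, exists z, Phi L <= tau <= Phi U -> L <= z <= U /\ Phi z = tau.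
Proof.
  intros tau. destruct (Rle_dec (Phi L) tau) as [H1|H1]; [|exists 0; intros; lra].
  destruct (Rle_dec tau (Phi U)) as [H2|H2]; [|exists 0; intros; lra].
  assert (Hcont : continuity (fun z => Phi z - tau)).
  { intros z. apply continuity_pt_minus; [apply Phi_cont| apply continuity_pt_const; intros u v; auto]. }
  destruct (IVT_cor _ L U Hcont ltac:(unfold L, U; lra) ltac:(nra)) as [z [Hz1 Hz2]].
  exists z. intros _. split; auto. lra.
Qed.

Definition Xq (tau : R) : R := proj1_sig (constructive_indefinite_description _ (inv_ex tau)).

Lemma Xq_spec tau : Phi L <= tau <= Phi U -> L <= Xq tau <= U /\ Phi (Xq tau) = tau.
Proof. unfold Xq. destruct (constructive_indefinite_description _ _) as [z Hz]. simpl. auto. Qed.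

Lemma Phi_inj x y : Phi x = Phi y -> x = y.
Proof. intros H. destruct (Rtotal_order x y) as [H'|[H'|H']]; auto;
  [pose proof (Phi_incr _ _ H')| pose proof (Phi_incr _ _ H')]; lra. Qed.

Lemma Xq_Phi x : L <= x <= U -> Xq (Phi x) = x.
Proof.
  intros H. assert (Phi L <= Phi x <= Phi U).
  { split.
    - destruct (Req_dec L x) as [<-|]; [lra| left; apply Phi_incr; lra].
    - destruct (Req_dec x U) as [->|]; [lra| left; apply Phi_incr; lra]. }
  destruct (Xq_spec _ H0). apply Phi_inj; auto.
Qed.

Lemma PhiL_lt : Phi L < 0.
Proof. rewrite <- Phi_a. apply Phi_incr. unfold L; lra. Qed.
Lemma PhiU_gt : 1 < Phi U.
Proof. rewrite <- Phi_b. apply Phi_incr. unfold U; lra. Qed.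

Lemma Xq_cont tau : Phi L < tau < Phi U -> continuity_pt Xq tau.
Proof.
  intros H. apply (continuity_pt_recip_interv Phi Xq L U ltac:(unfold L, U; lra)).
  - intros; apply Phi_incr; lra.
  - intros x H1 H2. unfold comp, id. apply Xq_spec; lra.
  - intros x H1 H2. apply Xq_spec; lra.
  - intros; apply Phi_cont.
  - auto.
Qed.

Lemma Xq_deriv tau : Phi L < tau < Phi U -> derivable_pt_lim Xq tau (I / f (Xq tau)).
Proof.
  intros H.
  pose (Prf := fun (x : R) (_ : Xq (Phi L) <= x <= Xq (Phi U)) =>
                 exist (fun l => derivable_pt_lim Phi x l) (f x / I) (Phi_deriv x)).
  assert (Hinc : Xq (Phi L) <= Xq tau <= Xq (Phi U)).
  { rewrite !Xq_Phi by (unfold L, U; lra). apply Xq_spec; lra. }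
  pose proof (derivable_pt_lim_recip_interv Phi Xq (Phi L) (Phi U) tau Prf (Xq_cont tau H)
     ltac:(lra) H Hinc) as D.
  assert (E : derive_pt Phi (Xq tau) (Prf (Xq tau) Hinc) = f (Xq tau) / I) by reflexivity.
  rewrite E in D. pose proof I_pos. pose proof (Hp (Xq tau)).
  replace (I / f (Xq tau)) with (1 / (f (Xq tau) / I)) by (field; lra).
  apply D.
  - intros x Hx. unfold comp, id. apply Xq_spec; lra.
  - apply Rgt_not_eq, Rdiv_lt_0_compat; lra.
Qed.

Lemma quantile_props : Xq 0 = a /\ Xq 1 = b /\
  forall tau, 0 <= tau <= 1 ->
    derivable_pt_lim Xq tau (RInt f a b / f (Xq tau)) /\ continuity_pt Xq tau.
Proof.
  pose proof PhiL_lt. pose proof PhiU_gt.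
  split; [rewrite <- Phi_a; apply Xq_Phi; unfold L, U; lra|].
  split; [rewrite <- Phi_b; apply Xq_Phi; unfold L, U; lra|].
  intros tau Ht. split; [apply Xq_deriv| apply Xq_cont]; lra.
Qed.

End Q.

Lemma cont_div_comp (F X : R -> R) c x :
  continuous F (X x) -> F (X x) <> 0 -> continuity_pt X x ->
  continuity_pt (fun tau => c / F (X tau)) x.
Proof.
  intros H1 H2 H3.
  apply (continuity_pt_comp X (fun u => c / F u)); auto.
  apply continuity_pt_div; [apply continuity_pt_const; intros u v; auto| apply cont_to_pt; auto| auto].
Qed.

Lemma PL (f g h : R -> R) (a b t : R) :
  a < b -> 0 < t < 1 ->
  (forall x, continuous f x) -> (forall x, continuous g x) -> (forall x, continuous h x) ->
  (forall x, 0 < f x) -> (forall x, 0 < g x) -> (forall x, 0 < h x) ->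
  (forall x y, t * ln (f x) + (1 - t) * ln (g y) <= ln (h (t * x + (1 - t) * y))) ->
  t * ln (RInt f a b) + (1 - t) * ln (RInt g a b) <= ln (RInt h a b).
Proof.
  intros Hab Ht Hcf Hcg Hch Hpf Hpg Hph Hkey.
  destruct (quantile_props f a b Hab Hcf Hpf) as [X0 [X1 HX]].
  destruct (quantile_props g a b Hab Hcg Hpg) as [Y0 [Y1 HY]].
  set (X := Xq f a b Hab Hcf) in *.
  set (Y := Xq g a b Hab Hcg) in *.
  set (If := RInt f a b) in *. set (Ig := RInt g a b) in *.
  assert (HIf : 0 < If) by (apply RInt_gt_0; auto).
  assert (HIg : 0 < Ig) by (apply RInt_gt_0; auto).
  set (Z := fun tau => t * X tau + (1 - t) * Y tau).
  set (dZ := fun tau => t * (If / f (X tau)) + (1 - t) * (Ig / g (Y tau))).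
  assert (H1 : forall x, Rmin 0 1 <= x <= Rmax 0 1 -> continuous h (Z x)) by (intros; apply Hch).
  assert (H2 : forall x, Rmin 0 1 <= x <= Rmax 0 1 -> is_derive Z x (dZ x) /\ continuous dZ x).
  { intros x Hx. rewrite Rmin_left, Rmax_right in Hx by lra.
    destruct (HX x Hx) as [DX CX]. destruct (HY x Hx) as [DY CY].
    split.
    - apply is_derive_Reals. unfold Z, dZ.
      apply (derivable_pt_lim_plus (fun tau => t * X tau) (fun tau => (1 - t) * Y tau)).
      + apply (derivable_pt_lim_scal X t x); auto.
      + apply (derivable_pt_lim_scal Y (1 - t) x); auto.
    - apply pt_to_cont. unfold dZ.
      apply (continuity_pt_plus (fun tau => t * (If / f (X tau))) (fun tau => (1 - t) * (Ig / g (Y tau)))).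
      + apply (continuity_pt_scal (fun tau => If / f (X tau))). apply cont_div_comp; auto.
        specialize (Hpf (X x)); lra.
      + apply (continuity_pt_scal (fun tau => Ig / g (Y tau))). apply cont_div_comp; auto.
        specialize (Hpg (Y x)); lra. }
  pose proof (is_RInt_comp h Z dZ 0 1 H1 H2) as HI.
  assert (EZ0 : Z 0 = a) by (unfold Z; rewrite X0, Y0; ring).
  assert (EZ1 : Z 1 = b) by (unfold Z; rewrite X1, Y1; ring).
  rewrite EZ0, EZ1 in HI.
  set (C := exp (t * ln If + (1 - t) * ln Ig)).
  assert (HC : C <= RInt h a b).
  { rewrite <- (is_RInt_unique _ _ _ _ HI).
    replace C with (RInt (fun _ => C) 0 1) by (rewrite RInt_const; unfold scal; simpl; unfold mult; simpl; ring).
    apply RInt_le; [lra| apply ex_RInt_const| exists (RInt h a b); exact HI|].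
    intros x Hx. unfold scal; simpl; unfold mult; simpl.
    destruct (HX x ltac:(lra)) as [_ _]. 
    pose proof (Hpf (X x)). pose proof (Hpg (Y x)). pose proof (Hph (Z x)).
    assert (HdZ : 0 < dZ x).
    { unfold dZ. assert (0 < If / f (X x)) by (apply Rdiv_lt_0_compat; auto).
      assert (0 < Ig / g (Y x)) by (apply Rdiv_lt_0_compat; auto). nra. }
    apply ln_le_inv; [apply exp_pos| nra|].
    unfold C. rewrite ln_exp, ln_mult by auto.
    pose proof (ln_concave (If / f (X x)) (Ig / g (Y x)) t ltac:(apply Rdiv_lt_0_compat; auto)
                  ltac:(apply Rdiv_lt_0_compat; auto) ltac:(lra)).
    rewrite !ln_div in H4 by auto.
    pose proof (Hkey (X x) (Y x)). unfold dZ, Z. lra. }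
  assert (0 < C) by apply exp_pos.
  replace (t * ln If + (1 - t) * ln Ig) with (ln C) by (unfold C; rewrite ln_exp; auto).
  apply ln_le; auto.
Qed.

Definition Pi (l : list nat) (w : nat -> R) (s : R) : R :=
  fold_right (fun i acc => phi (w i + s) * acc) 1 l.
Definition LPi (l : list nat) (w : nat -> R) (s : R) : R :=
  fold_right (fun i acc => lphi (w i + s) + acc) 0 l.
Definition F (l : list nat) (w : nat -> R) (s : R) : R := exp (s - exp s) * Pi l w s.
Definition H (l : list nat) (w : nat -> R) (s : R) : R := exp (- exp s) * Pi l w s.
Definition dsum (l : list nat) (w : nat -> R) (s : R) : R :=
  sum_list (map (fun p => exp (w (fst p)) * Pi (snd p) w s) (picks l)).

Lemma Pi_pos l w s : 0 < Pi l w s.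
Proof. induction l; simpl; [lra|]. pose proof (phi_pos (w a + s)). nra. Qed.
Lemma Pi_le1 l w s : Pi l w s <= 1.
Proof. induction l; simpl; [lra|]. pose proof (phi_pos (w a + s)). pose proof (phi_lt1 (w a + s)).
  pose proof (Pi_pos l w s). nra. Qed.
Lemma ln_Pi l w s : ln (Pi l w s) = LPi l w s.
Proof. induction l; simpl; [apply ln_1|]. rewrite ln_mult, IHl by (apply phi_pos || apply Pi_pos). auto. Qed.

Lemma phi_shift_deriv c s : derivable_pt_lim (fun s => phi (c + s)) s (exp s * exp c * (1 - phi (c + s))).
Proof.
  apply is_derive_Reals. unfold phi. auto_derive; auto.
  rewrite exp_plus. ring.
Qed.

Lemma deriv_eq f x l1 l2 : derivable_pt_lim f x l1 -> l1 = l2 -> derivable_pt_lim f x l2.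
Proof. intros H ->; auto. Qed.

Lemma Pi_deriv l w s : derivable_pt_lim (Pi l w) s (exp s * (dsum l w s - sumexp w l * Pi l w s)).
Proof.
  induction l as [|a l IH].
  - unfold dsum, sumexp; simpl. replace (exp s * (0 - 0 * 1)) with 0 by ring.
    apply derivable_pt_lim_const.
  - change (Pi (a :: l) w) with (fun s => phi (w a + s) * Pi l w s).
    apply (deriv_eq _ _ 
      ((exp s * exp (w a) * (1 - phi (w a + s))) * Pi l w s + phi (w a + s) * (exp s * (dsum l w s - sumexp w l * Pi l w s)))).
    + change (Pi (a :: l) w) with (fun s => phi (w a + s) * Pi l w s).
      apply (derivable_pt_lim_mult (fun s => phi (w a + s)) (Pi l w)); [apply phi_shift_deriv| apply IH].
    + unfold dsum, sumexp. rewrite picks_cons. cbn [map sum_list fold_right fst snd].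
      rewrite sum_map_map. cbn [fst snd Pi fold_right].
      rewrite (sum_ext_in (fun x => exp (w (fst x)) * (phi (w a + s) * Pi (snd x) w s))
                         (fun x => phi (w a + s) * (exp (w (fst x)) * Pi (snd x) w s))) by (intros; ring).
      rewrite sumL_scal. change (fold_right Rplus 0 (map (fun i => exp (w i)) l)) with (sum_list (map (fun i => exp (w i)) l)). ring.
Qed.

Definition Fsum (l : list nat) (w : nat -> R) (s : R) : R :=
  sum_list (map (fun p => exp (w (fst p)) * F (snd p) w s) (picks l)).

Lemma exp_s_exp s : exp (s - exp s) = exp s * exp (- exp s).
Proof. unfold Rminus. apply exp_plus. Qed.

Lemma Fsum_eq l w s : Fsum l w s = exp (s - exp s) * dsum l w s.
Proof. unfold Fsum, dsum, F. rewrite <- sumL_scal. apply sum_ext_in. intros; ring. Qed.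

Lemma H_deriv l w s : derivable_pt_lim (H l w) s (- (1 + sumexp w l) * F l w s + Fsum l w s).
Proof.
  unfold H. apply (deriv_eq _ _ ((- exp s * exp (- exp s)) * Pi l w s + exp (- exp s) * (exp s * (dsum l w s - sumexp w l * Pi l w s)))).
  - apply (derivable_pt_lim_mult (fun s => exp (- exp s)) (Pi l w)); [|apply Pi_deriv].
    apply is_derive_Reals. auto_derive; auto. ring.
  - rewrite Fsum_eq. unfold F. rewrite exp_s_exp. ring.
Qed.

Lemma Pi_cont l w s : continuity_pt (Pi l w) s.
Proof. apply derivable_continuous_pt. eexists. apply Pi_deriv. Qed.

Lemma F_cont l w s : continuity_pt (F l w) s.
Proof.
  unfold F. apply (continuity_pt_mult (fun s => exp (s - exp s)) (Pi l w)); [|apply Pi_cont].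
  apply derivable_continuous_pt. eexists. apply is_derive_Reals. auto_derive; auto.
Qed.

Lemma F_pos l w s : 0 < F l w s.
Proof. unfold F. pose proof (exp_pos (s - exp s)). pose proof (Pi_pos l w s). nra. Qed.

Lemma cont_sum (L : list (nat * list nat)) (c : nat * list nat -> R) (K : nat * list nat -> R -> R) s :
  (forall p, continuity_pt (K p) s) ->
  continuity_pt (fun s => sum_list (map (fun p => c p * K p s) L)) s.
Proof.
  intros HK. induction L as [|p L IH]; simpl.
  - apply continuity_pt_const. intros u v; auto.
  - apply (continuity_pt_plus (fun s => c p * K p s) (fun s => sum_list (map (fun p => c p * K p s) L))); auto.
    apply (continuity_pt_scal (K p)); auto.
Qed.

Lemma isRInt_sum (L : list (nat * list nat)) (c : nat * list nat -> R) (K : nat * list nat -> R -> R) a b :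
  (forall p x, continuity_pt (K p) x) ->
  is_RInt (fun s => sum_list (map (fun p => c p * K p s) L)) a b
          (sum_list (map (fun p => c p * RInt (K p) a b) L)).
Proof.
  intros HK. induction L as [|p L IH]; simpl.
  - pose proof (@is_RInt_const R_NormedModule a b 0) as H0.
    change (scal (b - a) 0) with (Rmult (b - a) 0) in H0. rewrite Rmult_0_r in H0. exact H0.
  - apply (is_RInt_plus (V := R_NormedModule) (fun s => c p * K p s)); auto.
    apply (is_RInt_scal (V := R_NormedModule) (K p) a b (c p)).
    apply (@RInt_correct R_CompleteNormedModule). apply (@ex_RInt_continuous R_CompleteNormedModule).
    intros; apply pt_to_cont, HK.
Qed.

Lemma int_identity l w a b :
  - (1 + sumexp w l) * RInt (F l w) a b +
  sum_list (map (fun p => exp (w (fst p)) * RInt (F (snd p) w) a b) (picks l)) =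
  H l w b - H l w a.
Proof.
  assert (D := is_RInt_derive (V := R_CompleteNormedModule) (H l w)
                 (fun s => - (1 + sumexp w l) * F l w s + Fsum l w s) a b).
  assert (E : is_RInt (V := R_NormedModule) (fun s => - (1 + sumexp w l) * F l w s + Fsum l w s) a b
     (- (1 + sumexp w l) * RInt (F l w) a b +
       sum_list (map (fun p => exp (w (fst p)) * RInt (F (snd p) w) a b) (picks l)))).
  { apply (is_RInt_plus (V := R_NormedModule) (fun s => - (1 + sumexp w l) * F l w s) (Fsum l w)).
    - apply (is_RInt_scal (V := R_NormedModule) (F l w) a b).
      apply (@RInt_correct R_CompleteNormedModule). apply (@ex_RInt_continuous R_CompleteNormedModule).
      intros; apply pt_to_cont, F_cont.
    - unfold Fsum. apply (isRInt_sum (picks l) (fun p => exp (w (fst p))) (fun p => F (snd p) w)).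
      intros; apply F_cont. }
  rewrite <- (is_RInt_unique _ _ _ _ E).
  rewrite (is_RInt_unique _ _ _ _ (D ltac:(intros; apply is_derive_Reals, H_deriv) ltac:(intros; apply pt_to_cont;
     apply (continuity_pt_plus (fun s => - (1 + sumexp w l) * F l w s) (Fsum l w));
     [apply (continuity_pt_scal (F l w)); apply F_cont| unfold Fsum;
      apply (cont_sum (picks l) (fun p => exp (w (fst p))) (fun p => F (snd p) w)); intros; apply F_cont]))).
  unfold minus, plus, opp; simpl. ring.
Qed.

Lemma lim_inv_n : is_lim_seq (fun n => / (INR n + 1)) 0.
Proof.
  assert (H1 : is_lim_seq (fun n => INR n + 1) p_infty).
  { apply (is_lim_seq_ext (fun n => INR (S n))). intros; apply S_INR.
    apply (is_lim_seq_incr_1 INR p_infty). apply is_lim_seq_INR. }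
  pose proof (is_lim_seq_inv _ _ H1 ltac:(discriminate)) as H2. simpl in H2. exact H2.
Qed.

Lemma lim_exp_neg : is_lim_seq (fun n => exp (- (INR n + 1))) 0.
Proof.
  apply (is_lim_seq_le_le (fun _ => 0) _ (fun n => / (INR n + 1))); [|apply is_lim_seq_const| apply lim_inv_n].
  intros n. pose proof (pos_INR n). split; [left; apply exp_pos|].
  rewrite exp_Ropp. apply Rinv_le_contravar; [lra|]. pose proof (exp_ineq1_le (INR n + 1)). lra.
Qed.

Lemma H_lim_plus l w : is_lim_seq (fun n => H l w (INR n + 1)) 0.
Proof.
  apply (is_lim_seq_le_le (fun _ => 0) _ (fun n => exp (- (INR n + 1)))); [|apply is_lim_seq_const| apply lim_exp_neg].
  intros n. unfold H. set (x := INR n + 1). pose proof (Pi_pos l w x). pose proof (Pi_le1 l w x).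
  pose proof (exp_pos (- exp x)). split; [nra|].
  assert (exp (- exp x) <= exp (- x)) by (apply exp_le_mono; pose proof (exp_ineq1_le x); lra).
  nra.
Qed.

Lemma H_lim_minus_nil w : is_lim_seq (fun n => H [] w (- (INR n + 1))) 1.
Proof.
  apply (is_lim_seq_ext (fun n => (fun v => exp (- v)) (exp (- (INR n + 1))))).
  { intros n. unfold H, Pi. simpl. ring. }
  assert (Hc : continuity_pt (fun v => exp (- v)) 0).
  { apply derivable_continuous_pt. eexists. apply is_derive_Reals. auto_derive; auto. }
  pose proof (is_lim_seq_continuous (fun v => exp (- v)) (fun n => exp (- (INR n + 1))) 0 Hc lim_exp_neg) as HL.
  cbv beta in HL. rewrite Ropp_0, exp_0 in HL. exact HL.
Qed.

Lemma H_lim_minus_cons i l w : is_lim_seq (fun n => H (i :: l) w (- (INR n + 1))) 0.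
Proof.
  apply (is_lim_seq_le_le (fun _ => 0) _ (fun n => exp (w i) * exp (- (INR n + 1))));
    [|apply is_lim_seq_const|].
  - intros n. unfold H. set (x := - (INR n + 1)). pose proof (Pi_pos (i :: l) w x).
    pose proof (exp_pos (- exp x)). split; [nra|]. simpl.
    pose proof (Pi_pos l w x). pose proof (Pi_le1 l w x).
    pose proof (phi_pos (w i + x)). pose proof (phi_le_exp (w i + x)). rewrite exp_plus in H5.
    assert (exp (- exp x) <= 1) by (rewrite <- exp_0; apply exp_le_mono; pose proof (exp_pos x); lra).
    assert (exp (- exp x) * (phi (w i + x) * Pi l w x) <= 1 * (phi (w i + x) * 1)).
    { apply Rmult_le_compat; try nra. }
    lra.
  - replace 0 with (exp (w i) * 0) by ring. apply (is_lim_seq_scal_l _ (exp (w i)) 0). apply lim_exp_neg.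
Qed.

Lemma lim_sum (L : list (nat * list nat)) (c : nat * list nat -> R) (u : nat * list nat -> nat -> R)
  (lv : nat * list nat -> R) :
  (forall p, In p L -> is_lim_seq (u p) (lv p)) ->
  is_lim_seq (fun n => sum_list (map (fun p => c p * u p n) L)) (sum_list (map (fun p => c p * lv p) L)).
Proof.
  induction L as [|p L IH]; intros Hl; simpl.
  - apply is_lim_seq_const.
  - apply is_lim_seq_plus'.
    + apply (is_lim_seq_scal_l _ (c p) (lv p)). apply Hl; left; auto.
    + apply IH. intros; apply Hl; right; auto.
Qed.

Definition G (n : nat) (l : list nat) (w : nat -> R) : R := RInt (F l w) (- (INR n + 1)) (INR n + 1).
Definition wfun (th : nat -> R) (B : list nat) (i : nat) : R := th i - ln (sumexp th B).

Lemma sumexp_cons th a l : sumexp th (a :: l) = exp (th a) + sumexp th l.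
Proof. reflexivity. Qed.

Lemma exp_wfun th B i : 0 < sumexp th B -> exp (wfun th B i) = exp (th i) / sumexp th B.
Proof. intros H. unfold wfun, Rminus. rewrite exp_plus, exp_Ropp, exp_ln by auto. auto. Qed.

Lemma sumexp_wfun th B l : 0 < sumexp th B -> sumexp (wfun th B) l = sumexp th l / sumexp th B.
Proof. intros H. induction l; [change (sumexp (wfun th B) []) with 0; change (sumexp th []) with 0; field; lra|].
  rewrite !sumexp_cons, IHl, exp_wfun by auto. field; lra. Qed.

Lemma G_step th B l : 0 < sumexp th B ->
  (forall p, In p (picks l) -> is_lim_seq (fun n => G n (snd p) (wfun th B)) (prob_BT th B (snd p))) ->
  is_lim_seq (fun n => G n l (wfun th B)) (prob_BT th B l).
Proof.
  intros Hmu IH. set (w := wfun th B) in *.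
  assert (HA : 0 <= sumexp w l) by apply sumexp_nonneg.
  set (Hm := match l with [] => 1 | _ => 0 end).
  assert (HHm : is_lim_seq (fun n => H l w (- (INR n + 1))) Hm)
    by (unfold Hm; destruct l; [apply H_lim_minus_nil| apply H_lim_minus_cons]).
  assert (L1 : is_lim_seq (fun n => (sum_list (map (fun p => exp (w (fst p)) * G n (snd p) w) (picks l))
        - (H l w (INR n + 1) - H l w (- (INR n + 1)))) / (1 + sumexp w l))
      ((sum_list (map (fun p => exp (w (fst p)) * prob_BT th B (snd p)) (picks l)) - (0 - Hm)) / (1 + sumexp w l))).
  { apply is_lim_seq_div'; [| apply is_lim_seq_const| lra].
    apply is_lim_seq_minus'.
    - apply (lim_sum (picks l) (fun p => exp (w (fst p))) (fun p n => G n (snd p) w)). auto.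
    - apply is_lim_seq_minus'; [apply H_lim_plus| auto]. }
  assert (Ev : (sum_list (map (fun p => exp (w (fst p)) * prob_BT th B (snd p)) (picks l)) - (0 - Hm)) / (1 + sumexp w l)
               = prob_BT th B l).
  { destruct l as [|i l'].
    - unfold Hm. cbn. field.
    - unfold Hm, w. rewrite sumexp_wfun by auto.
      rewrite (sum_ext_in _ (fun p => / sumexp th B * (exp (th (fst p)) * prob_BT th B (snd p))))
        by (intros; rewrite exp_wfun by auto; unfold Rdiv; ring).
      rewrite sumL_scal, <- prob_rec by discriminate.
      pose proof (sumexp_nonneg th (i :: l')). field. split; lra. }
  rewrite Ev in L1. eapply is_lim_seq_ext; [|exact L1].
  intros n. unfold G. rewrite <- (int_identity l w (- (INR n + 1)) (INR n + 1)). field. lra.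
Qed.

Lemma G_lim th B : 0 < sumexp th B -> forall l,
  is_lim_seq (fun n => G n l (wfun th B)) (prob_BT th B l).
Proof.
  intros Hmu.
  assert (forall k l, (length l <= k)%nat -> is_lim_seq (fun n => G n l (wfun th B)) (prob_BT th B l)).
  2:{ intros l; apply (H0 (length l)); auto. }
  induction k as [|k IH]; intros l Hl; apply G_step; auto; intros [x r] Hin;
    pose proof (Permutation_length (picks_perm _ _ _ Hin)) as E; simpl in E.
  - lia.
  - apply IH. simpl. lia.
Qed.

Lemma seq_prob_pos th B s : 0 < seq_prob th B s.
Proof.
  induction s as [|x s IH]; simpl; [lra|].
  pose proof (sumexp_pos th (x :: s) ltac:(discriminate)). pose proof (sumexp_nonneg th B).
  pose proof (exp_pos (th x)). apply Rmult_lt_0_compat; auto. apply Rdiv_lt_0_compat; lra.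
Qed.

Lemma perms_nonempty (l : list nat) : perms l <> [].
Proof.
  induction l as [|a l IH]; simpl; [discriminate|].
  destruct (perms l) as [|s ps]; [congruence|]. simpl. destruct s; simpl; discriminate.
Qed.

Lemma sum_pos {A : Type} (f : A -> R) (l : list A) : l <> [] -> (forall x, 0 < f x) -> 0 < sum_list (map f l).
Proof.
  intros Hl Hf. induction l as [|a l IH]; [congruence|]. simpl.
  destruct l as [|b l]. simpl. specialize (Hf a); lra.
  pose proof (IH ltac:(discriminate)). specialize (Hf a). simpl in *. lra.
Qed.

Lemma prob_pos th B l : 0 < prob_BT th B l.
Proof. unfold prob_BT. apply sum_pos; [apply perms_nonempty| apply seq_prob_pos]. Qed.

Lemma sum_le {A : Type} (f g : A -> R) (l : list A) : (forall x, f x <= g x) -> sum_list (map f l) <= sum_list (map g l).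
Proof. intros H. induction l; simpl; [lra|]. specialize (H a). lra. Qed.

Lemma exp_sub_ln a m : 0 < m -> exp (a - ln m) = exp a / m.
Proof. intros H. unfold Rminus. rewrite exp_plus, exp_Ropp, exp_ln by auto. auto. Qed.

Lemma LSE th1 th2 t B : 0 < sumexp th1 B -> 0 < sumexp th2 B -> 0 <= t <= 1 ->
  ln (sumexp (fun i => t * th1 i + (1 - t) * th2 i) B) <= t * ln (sumexp th1 B) + (1 - t) * ln (sumexp th2 B).
Proof.
  intros H1 H2 Ht. set (m1 := sumexp th1 B) in *. set (m2 := sumexp th2 B) in *.
  set (K := exp (t * ln m1 + (1 - t) * ln m2)).
  assert (Hle : sumexp (fun i => t * th1 i + (1 - t) * th2 i) B <= K).
  { unfold sumexp.
    apply Rle_trans with (sum_list (map (fun i => K * (t * (exp (th1 i) / m1) + (1 - t) * (exp (th2 i) / m2))) B)).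
    - apply sum_le. intros i.
      replace (t * th1 i + (1 - t) * th2 i) with
        ((t * ln m1 + (1 - t) * ln m2) + (t * (th1 i - ln m1) + (1 - t) * (th2 i - ln m2))) by ring.
      rewrite exp_plus. fold K. apply Rmult_le_compat_l; [left; apply exp_pos|].
      pose proof (exp_convex (th1 i - ln m1) (th2 i - ln m2) t Ht) as Hc.
      rewrite !exp_sub_ln in Hc by auto. exact Hc.
    - rewrite sumL_scal, sumL_plus, !sumL_scal.
      unfold Rdiv. rewrite (sum_ext_in (fun i => exp (th1 i) * / m1) (fun i => / m1 * exp (th1 i))) by (intros; ring).
      rewrite (sum_ext_in (fun i => exp (th2 i) * / m2) (fun i => / m2 * exp (th2 i))) by (intros; ring).
      rewrite !sumL_scal. fold (sumexp th1 B) (sumexp th2 B). fold m1 m2.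
      replace (t * (/ m1 * m1) + (1 - t) * (/ m2 * m2)) with 1 by (field; lra). lra. }
  assert (0 < sumexp (fun i => t * th1 i + (1 - t) * th2 i) B).
  { destruct B; [unfold m1, sumexp in H1; simpl in H1; lra| apply sumexp_pos; discriminate]. }
  apply Rle_trans with (ln K); [apply ln_le; auto| unfold K; rewrite ln_exp; lra].
Qed.

Lemma lnF l w s : ln (F l w s) = (s - exp s) + LPi l w s.
Proof. unfold F. rewrite ln_mult, ln_exp, ln_Pi by (apply exp_pos || apply Pi_pos). auto. Qed.

Lemma LPi_key l w1 w2 wt t x y : 0 <= t <= 1 ->
  (forall i, t * w1 i + (1 - t) * w2 i <= wt i) ->
  t * LPi l w1 x + (1 - t) * LPi l w2 y <= LPi l wt (t * x + (1 - t) * y).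
Proof.
  intros Ht Hw. induction l as [|a l IH]; simpl; [lra|].
  pose proof (lphi_concave (w1 a + x) (w2 a + y) t Ht).
  assert (lphi (t * (w1 a + x) + (1 - t) * (w2 a + y)) <= lphi (wt a + (t * x + (1 - t) * y))).
  { apply lphi_mono. specialize (Hw a). lra. }
  lra.
Qed.

Lemma F_key l w1 w2 wt t : 0 <= t <= 1 ->
  (forall i, t * w1 i + (1 - t) * w2 i <= wt i) ->
  forall x y, t * ln (F l w1 x) + (1 - t) * ln (F l w2 y) <= ln (F l wt (t * x + (1 - t) * y)).
Proof.
  intros Ht Hw x y. rewrite !lnF.
  pose proof (LPi_key l w1 w2 wt t x y Ht Hw).
  pose proof (exp_convex x y t Ht). lra.
Qed.

Lemma G_key n l w1 w2 wt t : 0 < t < 1 ->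
  (forall i, t * w1 i + (1 - t) * w2 i <= wt i) ->
  t * ln (G n l w1) + (1 - t) * ln (G n l w2) <= ln (G n l wt).
Proof.
  intros Ht Hw. unfold G. pose proof (pos_INR n).
  apply PL; try lra; try (intros; apply pt_to_cont, F_cont); try (intros; apply F_pos).
  apply F_key; auto; lra.
Qed.

Lemma ln_cont x : 0 < x -> continuity_pt ln x.
Proof. intros H. apply derivable_continuous_pt. exists (/ x). apply derivable_pt_lim_ln; auto. Qed.

Lemma concave_lnP B T : B <> [] -> concave (fun theta => ln (prob_BT theta B T)).
Proof.
  intros HB th1 th2 t Ht.
  destruct (Req_dec t 0) as [->|H0].
  { replace (fun i => 0 * th1 i + (1 - 0) * th2 i) with th2 by (apply functional_extensionality; intros; ring). lra. }
  destruct (Req_dec t 1) as [->|H1].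
  { replace (fun i => 1 * th1 i + (1 - 1) * th2 i) with th1 by (apply functional_extensionality; intros; ring). lra. }
  set (tht := fun i => t * th1 i + (1 - t) * th2 i).
  assert (M1 : 0 < sumexp th1 B) by (apply sumexp_pos; auto).
  assert (M2 : 0 < sumexp th2 B) by (apply sumexp_pos; auto).
  assert (Mt : 0 < sumexp tht B) by (apply sumexp_pos; auto).
  assert (Hw : forall i, t * wfun th1 B i + (1 - t) * wfun th2 B i <= wfun tht B i).
  { intros i. unfold wfun. pose proof (LSE th1 th2 t B M1 M2 ltac:(lra)) as HL. fold tht in HL. assert (tht i = t * th1 i + (1 - t) * th2 i) by reflexivity. nra. }
  assert (L1 := G_lim th1 B M1 T). assert (L2 := G_lim th2 B M2 T). assert (Lt := G_lim tht B Mt T).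
  pose proof (prob_pos th1 B T) as P1. pose proof (prob_pos th2 B T) as P2. pose proof (prob_pos tht B T) as P3.
  assert (LL1 := is_lim_seq_continuous ln _ _ (ln_cont _ P1) L1).
  assert (LL2 := is_lim_seq_continuous ln _ _ (ln_cont _ P2) L2).
  assert (LLt := is_lim_seq_continuous ln _ _ (ln_cont _ P3) Lt).
  assert (LU := is_lim_seq_plus' _ _ _ _ (is_lim_seq_mult' _ _ _ _ (is_lim_seq_const t) LL1)
                                        (is_lim_seq_mult' _ _ _ _ (is_lim_seq_const (1 - t)) LL2)).
  pose proof (is_lim_seq_le _ _ _ _ (fun n => G_key n T _ _ _ t ltac:(lra) Hw) LU LLt) as Hfin.
  simpl in Hfin. exact Hfin.
Qed.

Lemma concave_sum {X : Type} (L : list X) (fs : X -> (nat -> R) -> R) :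
  (forall x, In x L -> concave (fs x)) -> concave (fun th => sum_list (map (fun x => fs x th) L)).
Proof.
  induction L as [|a L IH]; intros H th1 th2 t Ht; simpl.
  - lra.
  - pose proof (H a (or_introl eq_refl) th1 th2 t Ht).
    pose proof (IH (fun x Hx => H x (or_intror Hx)) th1 th2 t Ht). simpl in *. lra.
Qed.

Theorem mainTheorem3 (d : nat) :
  (forall B T : list nat, valid_pair d B T ->
     concave (fun theta => ln (prob_BT theta B T)))
  /\
  (forall edges : list (list (list nat * list nat)),
     (forall ej e, In ej edges -> In e ej -> valid_pair d (fst e) (snd e)) ->
     concave (L_RB edges)).
Proof.
  split.
  - intros B T HV. apply concave_lnP. destruct HV as [_ [HB _]]. auto.
  - intros edges HE. unfold L_RB.
    apply (concave_sum edges (fun ej th => sum_list (map (fun e => ln (prob_BT th (fst e) (snd e))) ej))).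
    intros ej Hej.
    apply (concave_sum ej (fun e th => ln (prob_BT th (fst e) (snd e)))).
    intros e He. apply concave_lnP. destruct (HE ej e Hej He) as [_ [HB _]]. auto.
Qed.
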